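(* Let $k\ge 2$ and $n\ge 1$ be integers and let $1\le M\le kn-1$. Then the probability of selecting an item of highest rank (rank $n$) using the strategy $\mathcal{S}^+(n,k;M)$ is \[ P_{n,k}(\mathcal{S}^+(n,k;M))=\sum_{j=1}^{n-1}\sum_{l=1}^k \frac{\binom Ml(k)_l\,(k(j-1))_{M-l}}{(kn)_M}\cdot\frac 1{n-j}. \]
   Context: Fix integers $k\ge2$, $n\ge1$. There are $kn$ items, $k$ items at each of the ranks $1,2,\dots,n$ (rank $n$ is highest). The items are revealed one at a time in a uniformly random order, i.e. the sequence of ranks is a uniformly random permutation of the multiset $\{1^k,2^k,\dots,n^k\}$; $P_{n,k}$ denotes this uniform probability. For $M\in\{1,\dots,kn-1\}$, the strategy $\mathcal{S}^+(n,k;M)$ lets the first $M$ items pass and then selects the first later-arriving item whose rank is strictly greater than the highest rank among the first $M$ items (if such an item exists; otherwise nothing is selected). $P_{n,k}(\mathcal{S}^+(n,k;M))$ denotes the probability that this strategy selects an item of rank $n$. Notation: $(b)_a=b(b-1)\cdots(b-a+1)$ is the falling factorial for nonnegative integers $a,b$, with $(b)_0=1$ (so $(b)_a=0$ if $a>b$). *)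

(* Defs.v *)
From mathcomp Require Import all_boot all_order all_algebra.
Set Implicit Arguments. Unset Strict Implicit. Unset Printing Implicit Defensive.
Import GRing.Theory Num.Theory.

(* A rank sequence of length k*n: position i (0-based) carries the item of
   rank (s i) + 1, so rank values 1..n are encoded as 'I_n = {0..n-1};
   the highest rank n is encoded as n.-1.  Strict comparisons of ranks are
   unaffected by this shift. *)
Definition rank_seq (n k : nat) := {ffun 'I_(k * n) -> 'I_n}.

(* The possible orderings of the multiset {1^k, ..., n^k}: each rank occurs
   exactly k times.  The uniform probability P_{n,k} is the counting measure
   on this set, normalized. *)
Definition arrangements (n k : nat) : {set rank_seq n k} :=
  [set s : rank_seq n k | [forall r : 'I_n, #|[set i | s i == r]| == k]].

Definition max_first (n k M : nat) (s : rank_seq n k) : nat :=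
  \max_(i < k * n | i < M) (s i : nat).

Definition splus_success (n k M : nat) (s : rank_seq n k) : bool :=
  [exists i : 'I_(k * n),
     [&& M <= i, max_first M s < s i, (s i : nat) == n.-1 &
         [forall j : 'I_(k * n), ((M <= j) && (j < i)) ==> ((s j : nat) <= max_first M s)]]].

Definition P_splus (n k M : nat) : rat :=
  (#|[set s in arrangements n k | splus_success M s]|%:R / #|arrangements n k|%:R)%R.

(* Main.v *)
Require Import Defs.
From mathcomp Require Import all_boot all_order all_algebra.
From mathcomp Require Import zify ring.
Import GRing.Theory Num.Theory.
Set Implicit Arguments. Unset Strict Implicit. Unset Printing Implicit Defensive.

Lemma card_ltord N p : p <= N -> #|[set i : 'I_N | i < p]| = p.
Proof.
move=> pN.
have -> : [set i : 'I_N | i < p] = [set widen_ord pN j | j : 'I_p].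
  apply/setP => i; rewrite inE; apply/idP/imsetP.
    by move=> Hi; exists (Ordinal Hi) => //; apply: val_inj.
  by case=> j _ ->; rewrite /= ltn_ord.
by rewrite card_imset ?card_ord //; by move=> a b /(congr1 val) /= /val_inj.
Qed.

Lemma card_geord N p : p <= N -> #|[set i : 'I_N | p <= i]| = N - p.
Proof.
move=> pN; have := cardsC [set i : 'I_N | i < p].
rewrite card_ltord // card_ord.
have -> : ~: [set i : 'I_N | i < p] = [set i : 'I_N | p <= i].
  by apply/setP => i; rewrite !inE -leqNgt.
by move=> H; rewrite -[in RHS]H addKn.
Qed.

Lemma card_part (T : finType) (X : {set T}) (n : nat) (R : T -> 'I_n -> bool) :
  (forall x, x \in X -> exists m, R x m) ->
  (forall x m m', x \in X -> R x m -> R x m' -> m = m') ->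
  #|X| = \sum_(m < n) #|[set x in X | R x m]|.
Proof.
move=> Hex Hun.
have E m : #|[set x in X | R x m]| = \sum_(x in X) (R x m : nat).
  rewrite -sum1_card big_mkcond [RHS]big_mkcond; apply: eq_bigr => x _.
  by rewrite inE; case: (x \in X); case: (R x m).
under eq_bigr => m _ do rewrite E.
rewrite exchange_big /= -sum1_card; apply: eq_bigr => x Hx.
have [m0 Hm0] := Hex x Hx.
rewrite (bigD1 m0) //= Hm0 big1 // => m' Hm'.
case E': (R x m') => //.
by rewrite (Hun x m' m0 Hx E' Hm0) eqxx in Hm'.
Qed.

Lemma card_sum (T : finType) (S : {set T}) (P : pred T) :
  #|[set x in S | P x]| = \sum_(x in S) (P x : nat).
Proof.
rewrite -sum1_card big_mkcond [RHS]big_mkcond; apply: eq_bigr => x _.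
by rewrite inE; case: (x \in S); case: (P x).
Qed.

Definition sw (T : eqType) (a b x : T) := if x == a then b else if x == b then a else x.
Arguments sw {T}.

Lemma swK (T : eqType) (a b : T) : involutive (sw a b).
Proof.
move=> x; rewrite /sw.
case: (eqVneq x a) => [->|xa]; first by rewrite eqxx; case: (eqVneq b a) => [->|] //; rewrite eqxx.
case: (eqVneq x b) => [->|xb]; first by rewrite eqxx.
by rewrite (negPf xa) (negPf xb).
Qed.

Lemma sw_inj (T : eqType) (a b : T) : injective (sw a b).
Proof. exact: can_inj (swK a b). Qed.

Lemma sw_id (T : eqType) (a b x : T) : x != a -> x != b -> sw a b x = x.
Proof. by rewrite /sw => /negPf -> /negPf ->. Qed.

Lemma swL (T : eqType) (a b : T) : sw a b a = b.
Proof. by rewrite /sw eqxx. Qed.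

Lemma arrP n k (s : rank_seq n k) r : s \in arrangements n k -> #|[set i | s i == r]| = k.
Proof. by rewrite inE => /forallP /(_ r) /eqP. Qed.

Lemma cnt_lt n k (s : rank_seq n k) m : s \in arrangements n k -> m <= n ->
  #|[set i | s i < m]| = k * m.
Proof.
move=> Hs mn.
rewrite (@card_part _ _ n (fun i r => s i == r)); last first.
- by move=> x a b _ /eqP <- /eqP.
- by move=> x _; exists (s x).
transitivity (\sum_(r in [set r : 'I_n | r < m]) k); last first.
  by rewrite sum_nat_const card_ltord // mulnC.
rewrite [RHS]big_mkcond; apply: eq_bigr => r _; rewrite inE.
case: ltnP => Hr.
- rewrite -[RHS](arrP r Hs); apply: eq_card => i; rewrite !inE.
  by case: (eqVneq (s i) r) => [->|]; rewrite ?Hr ?andbF.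
- apply/eqP; rewrite cards_eq0; apply/eqP/setP => x; rewrite !inE.
  by case: (eqVneq (s x) r) => [->|]; rewrite ?andbF // ltnNge Hr.
Qed.

Definition pw {N n} (t0 i : 'I_N) (s : {ffun 'I_N -> 'I_n}) : {ffun 'I_N -> 'I_n} :=
  [ffun x => s (sw t0 i x)].

Lemma pwK N n (t0 i : 'I_N) : involutive (@pw N n t0 i).
Proof. by move=> s; apply/ffunP => x; rewrite !ffunE swK. Qed.

Lemma arr_pw n k (t0 i : 'I_(k * n)) s : s \in arrangements n k -> pw t0 i s \in arrangements n k.
Proof.
move=> Hs; rewrite inE; apply/forallP => r; apply/eqP.
rewrite -[RHS](arrP r Hs) -(card_preimset _ (@sw_inj _ t0 i)).
apply: eq_card => x; by rewrite !inE /pw ffunE swK.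
Qed.

Lemma arr_pwE n k (t0 i : 'I_(k * n)) s : (pw t0 i s \in arrangements n k) = (s \in arrangements n k).
Proof.
apply/idP/idP; last exact: arr_pw.
by move/(arr_pw t0 i); rewrite pwK.
Qed.

Definition lt_set n k m t : {set rank_seq n k} :=
  [set s in arrangements n k | [forall i : 'I_(k * n), (i < t) ==> (s i < m)]].

Lemma lt_step n k m t (Ht : t < k * n) : m <= n ->
  #|lt_set n k m t.+1| * (k * n - t) = #|lt_set n k m t| * (k * m - t).
Proof.
move=> mn; set t0 := Ordinal Ht.
have Ha (i : 'I_(k * n)) : t <= i ->
    #|[set s in lt_set n k m t | s i < m]| = #|lt_set n k m t.+1|.
  move=> ti; rewrite -[RHS](card_preimset _ (can_inj (pwK t0 i))).
  apply: eq_card => s; rewrite in_set [in RHS]in_set [pw t0 i s \in _]in_set arr_pwE [s \in lt_set _ _ _ _]in_set.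
  rewrite -andbA; case: (s \in arrangements n k) => //=.
  apply/idP/idP.
  - case/andP => /forallP H Hi; apply/forallP => x; apply/implyP => Hx.
    rewrite /pw ffunE.
    case: (ltnP x t) => Hxt.
    + rewrite sw_id; first by move/implyP: (H x); apply.
      * by apply/eqP => /(congr1 val) /= Ex; rewrite Ex ltnn in Hxt.
      * by apply/eqP => /(congr1 val) /= Ex; rewrite Ex ltnNge ti in Hxt.
    + have -> : x = t0 by apply: val_inj => /=; apply/eqP; rewrite eqn_leq Hxt -ltnS Hx.
      by rewrite swL.
  - move/forallP => H; apply/andP; split.
    + apply/forallP => x; apply/implyP => Hxt.
      have := implyP (H x) (ltnW Hxt).
      rewrite /pw ffunE sw_id; first by [].
      * by apply/eqP => /(congr1 val) /= Ex; rewrite Ex ltnn in Hxt.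
      * by apply/eqP => /(congr1 val) /= Ex; rewrite Ex ltnNge ti in Hxt.
    + have := implyP (H t0) (ltnSn t).
      by rewrite /pw ffunE swL.
have Hb : \sum_(i in [set i : 'I_(k * n) | t <= i]) #|[set s in lt_set n k m t | s i < m]|
    = (k * n - t) * #|lt_set n k m t.+1|.
  transitivity (\sum_(i in [set i : 'I_(k * n) | t <= i]) #|lt_set n k m t.+1|).
    by apply: eq_bigr => i; rewrite inE; exact: Ha.
  by rewrite sum_nat_const card_geord // ltnW.
have Hc : \sum_(i in [set i : 'I_(k * n) | t <= i]) #|[set s in lt_set n k m t | s i < m]|
    = \sum_(s in lt_set n k m t) (k * m - t).
  under eq_bigr do rewrite card_sum.
  rewrite exchange_big /=; apply: eq_bigr => s Hs.
  rewrite -card_sum.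
  move: Hs; rewrite inE => /andP [HA /forallP Hpre].
  have := cardsID [set i : 'I_(k * n) | i < t] [set i | s i < m].
  rewrite cnt_lt // => Hsum; rewrite -Hsum.
  have -> : [set i | s i < m] :&: [set i : 'I_(k * n) | i < t] = [set i : 'I_(k * n) | i < t].
    apply/setP => i; rewrite !inE; case Hit: (i < t); rewrite ?andbF //.
    by rewrite (implyP (Hpre i) Hit).
  rewrite card_ltord; last exact: ltnW.
  rewrite addKn; apply: eq_card => i; rewrite !inE -leqNgt.
  by rewrite andbC.
by rewrite mulnC -Hb Hc sum_nat_const.
Qed.

Lemma lt_count n k m t : t <= k * n -> m <= n ->
  #|lt_set n k m t| * (k * n) ^_ t = #|arrangements n k| * (k * m) ^_ t.
Proof.
move=> tN mn; elim: t tN => [|t IH] tN.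
  rewrite !ffactn0 !muln1; apply: eq_card => s; rewrite [s \in lt_set _ _ _ _]in_set.
  by case: (s \in arrangements n k) => //=; apply/forallP.
rewrite !ffactnSr mulnA mulnAC lt_step // mulnAC IH; last exact: ltnW.
by rewrite -mulnA.
Qed.

Lemma lt_mf n k M c (s : rank_seq n k) : 0 < M -> M < k * n ->
  (s \in lt_set n k c M) = (s \in arrangements n k) && (max_first M s < c).
Proof.
move=> M0 MN; rewrite [s \in lt_set _ _ _ _]in_set; congr andb.
case: c => [|c].
  rewrite ltn0; apply/negbTE/negP => /forallP /(_ (Ordinal (leq_ltn_trans (leq0n _) MN))).
  by rewrite /= M0.
rewrite ltnS; apply/forallP/bigmax_leqP => H i.
- by move=> Hi; have := implyP (H i) Hi.
- by apply/implyP => Hi; rewrite ltnS; apply: H.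
Qed.

Definition Eset n k M m : {set rank_seq n k} :=
  [set s in arrangements n k | max_first M s == m].

Lemma E_card n k M m : 0 < M -> M < k * n ->
  #|Eset n k M m| + #|lt_set n k m M| = #|lt_set n k m.+1 M|.
Proof.
move=> M0 MN; rewrite -(cardsID (lt_set n k m M) (lt_set n k m.+1 M)) addnC.
congr (_ + _); apply: eq_card => s.
- rewrite in_setI !lt_mf //; case: (s \in arrangements n k) => //=.
  by rewrite ltnS; case: ltngtP.
- rewrite in_setD !lt_mf // in_set; case: (s \in arrangements n k) => //=.
  by rewrite ltnS; case: ltngtP.
Qed.

Definition succ n k M (r : nat) (s : rank_seq n k) : bool :=
  [exists i : 'I_(k * n),
     [&& M <= i, max_first M s < s i, (s i : nat) == r &
         [forall j : 'I_(k * n), ((M <= j) && (j < i)) ==> ((s j : nat) <= max_first M s)]]].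

Lemma mf_le n k M (s : rank_seq n k) (i : 'I_(k * n)) : i < M -> s i <= max_first M s.
Proof. by move=> Hi; apply: (@leq_bigmax_cond _ (fun i : 'I_(k * n) => i < M)). Qed.

Lemma succ_uniq n k M (s : rank_seq n k) r r' : succ M r s -> succ M r' s -> r = r'.
Proof.
case/existsP => i /and4P [Mi Hi /eqP Ei /forallP Fi].
case/existsP => i' /and4P [Mi' Hi' /eqP Ei' /forallP Fi'].
case: (ltngtP i i') => Hii.
- by have := implyP (Fi' i) (introT andP (conj Mi Hii)); rewrite leqNgt Hi.
- by have := implyP (Fi i') (introT andP (conj Mi' Hii)); rewrite leqNgt Hi'.
- by rewrite -Ei -Ei' (val_inj Hii).
Qed.

Lemma succ_ex n k M (s : rank_seq n k) : 0 < n -> 0 < k ->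
  s \in arrangements n k -> max_first M s < n.-1 -> exists r : 'I_n, succ M r s.
Proof.
move=> n0 k0 Hs Hmf.
set top := Ordinal (etrans (ltn_predL n) n0).
have : 0 < #|[set i | s i == top]| by rewrite (arrP top Hs).
case/card_gt0P => i0; rewrite inE => /eqP Ei0.
have Hi0 : (M <= i0) && (max_first M s < s i0).
  rewrite Ei0 /= Hmf andbT leqNgt; apply/negP => Hlt.
  by have := mf_le s Hlt; rewrite Ei0 /= leqNgt Hmf.
case: (@arg_minnP _ i0 (fun i : 'I_(k * n) => (M <= i) && (max_first M s < s i)) (fun i : 'I_(k * n) => i : nat) Hi0) => j /andP [Mj Hj] Hmin.
exists (s j); apply/existsP; exists j; rewrite Mj Hj eqxx /=.
apply/forallP => j'; apply/implyP => /andP [Mj' Hj'].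
rewrite leqNgt; apply/negP => H.
by have := Hmin j' (introT andP (conj Mj' H)); rewrite leqNgt Hj'.
Qed.

Definition vw {N n} (a b : 'I_n) (s : {ffun 'I_N -> 'I_n}) : {ffun 'I_N -> 'I_n} :=
  [ffun x => sw a b (s x)].

Lemma vwK N n (a b : 'I_n) : involutive (@vw N n a b).
Proof. by move=> s; apply/ffunP => x; rewrite !ffunE swK. Qed.

Lemma swC (T : eqType) (a b x : T) : sw a b x = sw b a x.
Proof.
rewrite /sw; case: (eqVneq x a) => [->|xa]; case: (eqVneq x b) => [xb|xb] //.
- by case: eqP.
- by case: eqP.
Qed.

Lemma sw_eqE (T : eqType) (a b y r : T) : (sw a b y == r) = (y == sw a b r).
Proof. by apply/eqP/eqP => [<-|->]; rewrite swK. Qed.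

Lemma arr_vw n k (a b : 'I_n) (s : rank_seq n k) :
  s \in arrangements n k -> vw a b s \in arrangements n k.
Proof.
move=> Hs; rewrite inE; apply/forallP => r; apply/eqP.
rewrite -[RHS](arrP (sw a b r) Hs); apply: eq_card => x.
by rewrite !inE /vw ffunE sw_eqE.
Qed.

Lemma mf_vw n k M (a b : 'I_n) (s : rank_seq n k) :
  max_first M s < a -> max_first M s < b -> max_first M (vw a b s) = max_first M s.
Proof.
move=> Ha Hb; rewrite /max_first; apply: eq_bigr => i Hi.
rewrite /vw ffunE sw_id //.
- by apply/eqP => Ei; have := mf_le s Hi; rewrite Ei leqNgt Ha.
- by apply/eqP => Ei; have := mf_le s Hi; rewrite Ei leqNgt Hb.
Qed.

Lemma key n k M m (a b : 'I_n) (s : rank_seq n k) : m < a -> m < b ->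
  (s \in Eset n k M m) && succ M a s ->
  (vw a b s \in Eset n k M m) && succ M b (vw a b s).
Proof.
move=> ma mb /andP []; rewrite inE => /andP [Hs /eqP Hm].
have Ha : max_first M s < a by rewrite Hm.
have Hb : max_first M s < b by rewrite Hm.
case/existsP => i /and4P [Mi Hi /eqP Ei /forallP Fi].
rewrite inE arr_vw //= mf_vw // Hm eqxx /=.
apply/existsP; exists i; rewrite mf_vw // Mi /=.
have -> : vw a b s i = b by rewrite /vw ffunE (_ : s i = a) ?swL //; apply: val_inj.
rewrite Hb eqxx /=; apply/forallP => j; apply/implyP => Hj.
have Hsj := implyP (Fi j) Hj.
rewrite /vw ffunE sw_id //.
- by apply/eqP => Ej; rewrite Ej leqNgt Ha in Hsj.
- by apply/eqP => Ej; rewrite Ej leqNgt Hb in Hsj.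
Qed.

Lemma F_eq n k M m (a b : 'I_n) : m < a -> m < b ->
  #|[set s in Eset n k M m | succ M a s]| = #|[set s in Eset n k M m | succ M b s]|.
Proof.
move=> ma mb; rewrite -[RHS](card_preimset _ (can_inj (@vwK (k * n) n a b))).
apply: eq_card => s; rewrite in_set [in RHS]in_set [vw a b s \in _]in_set.
apply/idP/idP; first exact: key.
move/(key mb ma); suff -> : vw b a (vw a b s) = s by [].
by apply/ffunP => x; rewrite !ffunE swC swK.
Qed.

Lemma F_small n k M m r : r <= m -> #|[set s in Eset n k M m | succ M r s]| = 0.
Proof.
move=> rm; apply/eqP; rewrite cards_eq0; apply/eqP/setP => s; rewrite !inE.
apply/negbTE/negP => /andP [/andP [_ /eqP Hm]] /existsP [i /and4P [_ Hi /eqP Ei _]].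
by move: Hi; rewrite Ei Hm ltnNge rm.
Qed.

Lemma E_F n k M m (n0 : 0 < n) : 0 < k -> m < n.-1 ->
  #|Eset n k M m| = (n.-1 - m) * #|[set s in Eset n k M m | succ M n.-1 s]|.
Proof.
move=> k0 mn.
set top := Ordinal (etrans (ltn_predL n) n0).
rewrite (@card_part _ _ n (fun s r => succ M r s)); last first.
- by move=> s a b _ Ha Hb; apply: val_inj; exact: succ_uniq Ha Hb.
- move=> s; rewrite inE => /andP [Hs /eqP Hm]; apply: succ_ex => //.
  by rewrite Hm.
transitivity (\sum_(r in [set r : 'I_n | m.+1 <= r]) #|[set s in Eset n k M m | succ M top s]|).
  rewrite [RHS]big_mkcond; apply: eq_bigr => r _; rewrite inE; case: leqP => Hr.
  - by apply: F_small.
  - by apply: F_eq.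
rewrite sum_nat_const card_geord; last by lia.
congr (_ * _); lia.
Qed.

Lemma S_card n k M : 0 < n ->
  #|[set s in arrangements n k | splus_success M s]| =
  \sum_(m < n) #|[set s in Eset n k M m | succ M n.-1 s]|.
Proof.
move=> n0.
rewrite (@card_part _ _ n (fun s m => max_first M s == m)); last first.
- by move=> s a b _ /eqP Ha /eqP Hb; apply: val_inj; rewrite /= -Ha -Hb.
- move=> s _.
  have Hlt : max_first M s < n.
    apply: (@leq_ltn_trans n.-1); last by rewrite ltn_predL.
    apply/bigmax_leqP => i _.
    by rewrite -ltnS (ltn_predK n0).
  by exists (Ordinal Hlt).
apply: eq_bigr => m _; apply: eq_card => s.
rewrite in_set [in RHS]in_set [s \in [set _ in arrangements n k | _]]in_set.
rewrite [s \in Eset _ _ _ _]in_set.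
by case: (s \in arrangements n k) => //=; rewrite andbC.
Qed.

Lemma arr_nonempty n k : 0 < k -> 0 < #|arrangements n k|.
Proof.
move=> k0.
have Hlt (i : 'I_(k * n)) : i %/ k < n by rewrite ltn_divLR // [n * k]mulnC.
pose s0 : rank_seq n k := [ffun i => Ordinal (Hlt i)].
apply/card_gt0P; exists s0; rewrite inE; apply/forallP => r; apply/eqP.
have lt_rk (j : 'I_k) : r * k + j < k * n.
  apply: (@leq_trans (r.+1 * k)); first by rewrite mulSn; have := ltn_ord j; lia.
  by rewrite mulnC leq_mul2l ltn_ord orbT.
pose f (j : 'I_k) : 'I_(k * n) := Ordinal (lt_rk j).
have -> : [set i | s0 i == r] = [set f j | j in 'I_k].
  apply/setP => i; rewrite inE ffunE; apply/idP/imsetP.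
  - move=> /eqP /(congr1 val) /= Hi.
    exists (Ordinal (ltn_pmod i k0)) => //; apply: val_inj => /=.
    by rewrite -Hi -divn_eq.
  - case=> j _ ->; apply/eqP; apply: val_inj => /=.
    by rewrite divnMDl // divn_small // addn0.
rewrite card_imset ?card_ord //.
by move=> a b /(congr1 val) /= /addnI /val_inj.
Qed.

Lemma vdm_ff a b M : \sum_(l < M.+1) 'C(M, l) * a ^_ l * b ^_ (M - l) = (a + b) ^_ M.
Proof.
rewrite -bin_ffact -binomial.Vandermonde big_distrl /=; apply: eq_bigr => l _.
rewrite -!bin_ffact -(bin_fact (ltnSE (ltn_ord l))).
ring.
Qed.

Lemma sum_widen (F : nat -> nat) n1 n2 : n1 <= n2 -> (forall i, n1 <= i -> F i = 0) ->
  \sum_(i < n1) F i = \sum_(i < n2) F i.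
Proof.
move=> n12 H; rewrite (big_ord_widen _ _ n12) big_mkcond; apply: eq_bigr => i _.
by case: ltnP => // Hi; rewrite H.
Qed.

Lemma sum1_eq k M m : 0 < M ->
  \sum_(1 <= l < k.+1) 'C(M, l) * k ^_ l * (k * m) ^_ (M - l) =
  (k * m.+1) ^_ M - (k * m) ^_ M.
Proof.
move=> M0.
have E : \sum_(0 <= l < k.+1) 'C(M, l) * k ^_ l * (k * m) ^_ (M - l) = (k * m.+1) ^_ M.
  rewrite big_mkord (@sum_widen (fun l => 'C(M, l) * k ^_ l * (k * m) ^_ (M - l)) _ (k + M).+1); last first.
  - by move=> i Hi; rewrite ffact_small ?muln0 ?mul0n.
  - by rewrite ltnS leq_addr.
  rewrite -(@sum_widen (fun l => 'C(M, l) * k ^_ l * (k * m) ^_ (M - l)) M.+1); last first.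
  - by move=> i Hi; rewrite bin_small.
  - by rewrite ltnS leq_addl.
  by rewrite vdm_ff mulnS.
rewrite -E [in RHS]big_ltn // bin0 ffactn0 mul1n subn0 mul1n addKn.
by [].
Qed.

Local Open Scope ring_scope.

Lemma frac_eq (F A S D Q : rat) : A != 0 -> D != 0 -> Q != 0 -> F * Q * D = A * S ->
  F / A = S / D * (1 / Q).
Proof.
move=> hA hD hQ h.
have -> : S = F * Q * D / A by rewrite h [A * S]mulrC mulfK.
by field; rewrite hA hD hQ.
Qed.

Unset Implicit Arguments.

Theorem proposition2 (n k M : nat) (hk : (2 <= k)%N) (hn : (1 <= n)%N)
  (hM1 : (1 <= M)%N) (hM2 : (M <= k * n - 1)%N) :
  P_splus n k M =
  \sum_(1 <= j < n) \sum_(1 <= l < k.+1)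
     (('C(M, l) * k ^_ l * (k * (j - 1)) ^_ (M - l))%:R / ((k * n) ^_ M)%:R)
       * (1 / (n - j)%:R).
Proof.
case: n hn hM2 => [//|n'] _ hM2.
have k0 : (0 < k)%N by lia.
have N0 : (0 < k * n'.+1)%N by rewrite muln_gt0 k0.
have MN : (M < k * n'.+1)%N by lia.
rewrite /P_splus S_card // big_ord_recr /= F_small // addn0.
rewrite big_add1 /= big_mkord.
rewrite natr_sum mulr_suml; apply: eq_bigr => m _.
rewrite !subSS subn0 -!mulr_suml -natr_sum sum1_eq //.
apply: frac_eq.
- by rewrite pnatr_eq0 -lt0n arr_nonempty.
- by rewrite pnatr_eq0 -lt0n ffact_gt0 ltnW.
- by rewrite pnatr_eq0 subn_eq0 -ltnNge ltn_ord.
rewrite -!natrM; congr (_%:R).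
have HEF := @E_F n'.+1 k M m (ltn0Sn n') k0 (ltn_ord m).
have HE := @E_card n'.+1 k M m hM1 MN.
have L1 := @lt_count n'.+1 k m M (ltnW MN) (leq_trans (ltnW (ltn_ord m)) (leqnSn n')).
have L2 := @lt_count n'.+1 k m.+1 M (ltnW MN) (ltnW (ltn_ord m)).
rewrite /= in HEF.
rewrite (mulnC _ (n' - m)%N) -HEF.
have -> : #|Eset n'.+1 k M m| = (#|lt_set n'.+1 k m.+1 M| - #|lt_set n'.+1 k m M|)%N.
  by rewrite -HE addnK.
by rewrite mulnBl L1 L2 mulnBr.
Qed.
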